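(* Let $\xi,\zeta$ be stoups, $\Pi,\Gamma_1,\Gamma_2$ finite sequences of tree terms, $A,C$ formulae and $\Xi(\cdot)$ a meta-formula context. If the sequents $\xi;\Pi\to A$ and $\Xi(\zeta;\Gamma_1,A,\Gamma_2)\to C$ are derivable in the calculus $\mathcal{M}'_{2015}$ defined below, then the sequent $\Xi(\xi,\zeta;\Gamma_1,\Pi,\Gamma_2)\to C$ is also derivable in $\mathcal{M}'_{2015}$.
   Context: Formulae are built from a countable set of variables and the constant $\mathbf{1}$ by the binary connectives $\backslash$, $/$, $\cdot$, $\wedge$, $\vee$ and the unary connectives $\langle\rangle$, $[]^{-1}$ (bracket modalities) and $!$ (subexponential). A stoup is a finite multiset of formulae ($\varnothing$ is the empty stoup). A tree term is either a formula or an expression $[\Xi]$ with $\Xi$ a meta-formula; a meta-formula is an expression $\zeta;\Gamma$ where $\zeta$ is a stoup and $\Gamma$ is a finite linearly ordered sequence of tree terms (the empty sequence is written $\Lambda$); $\varnothing;\Gamma$ is written simply $\Gamma$. Comma denotes both concatenation of sequences and multiset union of stoups; $\zeta,A$ is $\zeta$ with one more copy of $A$. A sequent is $\Xi\to C$ with $\Xi$ a meta-formula and $C$ a formula. $\Xi(\Theta)$ denotes a meta-formula with a designated occurrence of a meta-formula $\Theta$, which is either $\Xi$ itself or the content of some bracket $[\Theta]$ occurring at any depth in $\Xi$; $\Xi(\Theta')$ is the result of replacing that occurrence by $\Theta'$. Below $A,B,C,D,A_1,A_2$ are formulae, $\Gamma,\Delta,\Delta_i,\Gamma_i$ sequences of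 tree terms, $\zeta,\zeta',\zeta_i$ stoups, $\Xi$ a meta-formula. Common axioms and rules: axioms $A\to A$ and $\Lambda\to\mathbf 1$; ($/L$) from $\zeta_1;\Gamma\to B$ and $\Xi(\zeta_2;\Delta_1,C,\Delta_2)\to D$ infer $\Xi(\zeta_1,\zeta_2;\Delta_1,C/B,\Gamma,\Delta_2)\to D$; ($/R$) from $\zeta;\Gamma,B\to C$ infer $\zeta;\Gamma\to C/B$; ($\backslash L$) from $\zeta_1;\Gamma\to A$ and $\Xi(\zeta_2;\Delta_1,C,\Delta_2)\to D$ infer $\Xi(\zeta_1,\zeta_2;\Delta_1,\Gamma,A\backslash C,\Delta_2)\to D$; ($\backslash R$) from $\zeta;A,\Gamma\to C$ infer $\zeta;\Gamma\to A\backslash C$; ($\cdot L$) from $\Xi(\zeta;\Delta_1,A,B,\Delta_2)\to D$ infer $\Xi(\zeta;\Delta_1,A\cdot B,\Delta_2)\to D$; ($\cdot R$) from $\zeta_1;\Delta\to A$ and $\zeta_2;\Gamma\to B$ infer $\zeta_1,\zeta_2;\Delta,\Gamma\to A\cdot B$; ($\mathbf1 L$) from $\Xi(\zeta;\Delta_1,\Delta_2)\to A$ infer $\Xi(\zeta;\Delta_1,\mathbf1,\Delta_2)\to A$; ($\vee L$) from $\Xi(\zeta;\Delta_1,A_1,\Delta_2)\to C$ and $\Xi(\zeta;\Delta_1,A_2,\Delta_2)\to C$ infer $\Xi(\zeta;\Delta_1,A_1\vee A_2,\Delta_2)\to C$; ($\vee R_i$, $i=1,2$) from $\Xi\to A_i$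 infer $\Xi\to A_1\vee A_2$; ($\wedge L_i$) from $\Xi(\zeta;\Delta_1,A_i,\Delta_2)\to C$ infer $\Xi(\zeta;\Delta_1,A_1\wedge A_2,\Delta_2)\to C$; ($\wedge R$) from $\Xi\to A_1$ and $\Xi\to A_2$ infer $\Xi\to A_1\wedge A_2$; ($[]^{-1}L$) from $\Xi(\zeta;\Delta_1,A,\Delta_2)\to B$ infer $\Xi(\zeta;\Delta_1,[[]^{-1}A],\Delta_2)\to B$; ($[]^{-1}R$) from $[\Xi]\to A$ infer $\Xi\to []^{-1}A$; ($\langle\rangle L$) from $\Xi(\zeta;\Delta_1,[A],\Delta_2)\to B$ infer $\Xi(\zeta;\Delta_1,\langle\rangle A,\Delta_2)\to B$; ($\langle\rangle R$) from $\Xi\to A$ infer $[\Xi]\to\langle\rangle A$; ($!L$) from $\Xi(\zeta,A;\Gamma_1,\Gamma_2)\to B$ infer $\Xi(\zeta;\Gamma_1,!A,\Gamma_2)\to B$; ($!P$) from $\Xi(\zeta;\Gamma_1,A,\Gamma_2)\to B$ infer $\Xi(\zeta,A;\Gamma_1,\Gamma_2)\to B$. The calculus $\mathcal{M}'_{2015}$ consists of the common axioms and rules together with ($!R'$) from $\zeta;\Lambda\to B$ infer $\zeta;\Lambda\to !B$, provided $\zeta\neq\varnothing$, and ($!C'$) from $\Xi(\zeta_1,\zeta_2;\Gamma_1,[\zeta',\zeta_2;\Gamma_2],\Gamma_3)\to C$ infer $\Xi(\zeta_1,\zeta_2,\zeta';\Gamma_1,\Gamma_2,\Gamma_3)\to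 C$, provided $\zeta_2\neq\varnothing$. Cut is not a rule of the calculus; ''derivable'' means derivable by the listed axioms and rules. *)

(* Defs.v *)
From HB Require Import structures.
From mathcomp Require Import all_boot.
From mathcomp Require Import finmap multiset.

Set Implicit Arguments.
Unset Strict Implicit.
Unset Printing Implicit Defensive.

Inductive formula : Type :=
  | Var    : nat -> formula
  | One    : formula
  | Under  : formula -> formula -> formula   (* Under A C  =  A \ C *)
  | Over   : formula -> formula -> formula   (* Over C B   =  C / B *)
  | Prod   : formula -> formula -> formula
  | And    : formula -> formula -> formula
  | Or     : formula -> formula -> formula
  | Diam   : formula -> formula
  | BoxInv : formula -> formula
  | Bang   : formula -> formula.

(* Countable (hence choice) structure on formulae, needed for {mset formula}. *)
Fixpoint enc_formula (A : formula) : GenTree.tree nat :=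
  match A with
  | Var n => GenTree.Leaf n
  | One => GenTree.Node 0 [::]
  | Under A B => GenTree.Node 1 [:: enc_formula A; enc_formula B]
  | Over A B => GenTree.Node 2 [:: enc_formula A; enc_formula B]
  | Prod A B => GenTree.Node 3 [:: enc_formula A; enc_formula B]
  | And A B => GenTree.Node 4 [:: enc_formula A; enc_formula B]
  | Or A B => GenTree.Node 5 [:: enc_formula A; enc_formula B]
  | Diam A => GenTree.Node 6 [:: enc_formula A]
  | BoxInv A => GenTree.Node 7 [:: enc_formula A]
  | Bang A => GenTree.Node 8 [:: enc_formula A]
  end.

Fixpoint dec_formula (t : GenTree.tree nat) : option formula :=
  match t with
  | GenTree.Leaf n => Some (Var n)
  | GenTree.Node 0 [::] => Some One
  | GenTree.Node k [:: t1; t2] =>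
      match dec_formula t1, dec_formula t2 with
      | Some A, Some B =>
          match k with
          | 1 => Some (Under A B)
          | 2 => Some (Over A B)
          | 3 => Some (Prod A B)
          | 4 => Some (And A B)
          | 5 => Some (Or A B)
          | _ => None
          end
      | _, _ => None
      end
  | GenTree.Node k [:: t1] =>
      match dec_formula t1 with
      | Some A =>
          match k with
          | 6 => Some (Diam A)
          | 7 => Some (BoxInv A)
          | 8 => Some (Bang A)
          | _ => None
          end
      | None => None
      end
  | _ => None
  end.

Lemma enc_formulaK : pcancel enc_formula dec_formula.
Proof. by elim=> //= [A -> B ->|A -> B ->|A -> B ->|A -> B ->|A -> B ->|A ->|A ->|A ->]. Qed.

HB.instance Definition _ := Countable.copy formula (pcan_type enc_formulaK).

Definition stoup := {mset formula}%mset.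

(* Tree terms and meta-formulae (mutually defined).
   TF A   : a formula as a tree term;
   TB Xi  : the bracketed tree term [Xi];
   Meta z G : the meta-formula  z ; G  (stoup z, ordered sequence G). *)
Inductive tterm : Type :=
  | TF : formula -> tterm
  | TB : meta -> tterm
with meta : Type :=
  | Meta : stoup -> seq tterm -> meta.

(* Contexts Xi(.) : a meta-formula with a designated occurrence of a
   meta-formula, which is either the whole meta-formula (Hole) or the
   content of some bracket, at any depth. *)
Inductive ctx : Type :=
  | Hole : ctx
  | CBr : stoup -> seq tterm -> ctx -> seq tterm -> ctx.
  (* CBr z L c R  denotes  z ; L, [c(.)], R *)

Fixpoint fill (X : ctx) (T : meta) : meta :=
  match X with
  | Hole => T
  | CBr z L c R => Meta z (L ++ TB (fill c T) :: R)
  end.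

Local Open Scope mset_scope.

Inductive derivable : meta -> formula -> Prop :=
  | d_ax A : derivable (Meta mset0 [:: TF A]) A
  | d_oneR : derivable (Meta mset0 [::]) One
  | d_overL X z1 z2 G D1 D2 B C D :
      derivable (Meta z1 G) B ->
      derivable (fill X (Meta z2 (D1 ++ TF C :: D2))) D ->
      derivable (fill X (Meta (z1 `+` z2) (D1 ++ TF (Over C B) :: G ++ D2))) D
  | d_overR z G B C :
      derivable (Meta z (G ++ [:: TF B])) C ->
      derivable (Meta z G) (Over C B)
  | d_underL X z1 z2 G D1 D2 A C D :
      derivable (Meta z1 G) A ->
      derivable (fill X (Meta z2 (D1 ++ TF C :: D2))) D ->
      derivable (fill X (Meta (z1 `+` z2) (D1 ++ G ++ TF (Under A C) :: D2))) D
  | d_underR z G A C :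
      derivable (Meta z (TF A :: G)) C ->
      derivable (Meta z G) (Under A C)
  | d_prodL X z D1 D2 A B D :
      derivable (fill X (Meta z (D1 ++ TF A :: TF B :: D2))) D ->
      derivable (fill X (Meta z (D1 ++ TF (Prod A B) :: D2))) D
  | d_prodR z1 z2 D G A B :
      derivable (Meta z1 D) A ->
      derivable (Meta z2 G) B ->
      derivable (Meta (z1 `+` z2) (D ++ G)) (Prod A B)
  | d_oneL X z D1 D2 A :
      derivable (fill X (Meta z (D1 ++ D2))) A ->
      derivable (fill X (Meta z (D1 ++ TF One :: D2))) A
  | d_orL X z D1 D2 A1 A2 C :
      derivable (fill X (Meta z (D1 ++ TF A1 :: D2))) C ->
      derivable (fill X (Meta z (D1 ++ TF A2 :: D2))) C ->
      derivable (fill X (Meta z (D1 ++ TF (Or A1 A2) :: D2))) C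
  | d_orR1 Xi A1 A2 : derivable Xi A1 -> derivable Xi (Or A1 A2)
  | d_orR2 Xi A1 A2 : derivable Xi A2 -> derivable Xi (Or A1 A2)
  | d_andL1 X z D1 D2 A1 A2 C :
      derivable (fill X (Meta z (D1 ++ TF A1 :: D2))) C ->
      derivable (fill X (Meta z (D1 ++ TF (And A1 A2) :: D2))) C
  | d_andL2 X z D1 D2 A1 A2 C :
      derivable (fill X (Meta z (D1 ++ TF A2 :: D2))) C ->
      derivable (fill X (Meta z (D1 ++ TF (And A1 A2) :: D2))) C
  | d_andR Xi A1 A2 :
      derivable Xi A1 -> derivable Xi A2 -> derivable Xi (And A1 A2)
  | d_boxinvL X z D1 D2 A B :
      derivable (fill X (Meta z (D1 ++ TF A :: D2))) B ->
      derivable (fill X (Meta z (D1 ++ TB (Meta mset0 [:: TF (BoxInv A)]) :: D2))) B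
  | d_boxinvR Xi A :
      derivable (Meta mset0 [:: TB Xi]) A ->
      derivable Xi (BoxInv A)
  | d_diamL X z D1 D2 A B :
      derivable (fill X (Meta z (D1 ++ TB (Meta mset0 [:: TF A]) :: D2))) B ->
      derivable (fill X (Meta z (D1 ++ TF (Diam A) :: D2))) B
  | d_diamR Xi A :
      derivable Xi A ->
      derivable (Meta mset0 [:: TB Xi]) (Diam A)
  | d_bangL X z G1 G2 A B :
      derivable (fill X (Meta (z `+` [mset A]) (G1 ++ G2))) B ->
      derivable (fill X (Meta z (G1 ++ TF (Bang A) :: G2))) B
  | d_bangP X z G1 G2 A B :
      derivable (fill X (Meta z (G1 ++ TF A :: G2))) B ->
      derivable (fill X (Meta (z `+` [mset A]) (G1 ++ G2))) B
  | d_bangR' z B :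
      z != mset0 ->
      derivable (Meta z [::]) B ->
      derivable (Meta z [::]) (Bang B)
  | d_bangC' X z1 z2 z' G1 G2 G3 C :
      z2 != mset0 ->
      derivable (fill X (Meta (z1 `+` z2) (G1 ++ TB (Meta (z' `+` z2) G2) :: G3))) C ->
      derivable (fill X (Meta (z1 `+` z2 `+` z') (G1 ++ G2 ++ G3))) C.

(* Main.v *)
Require Import Defs.
From mathcomp Require Import all_boot.
From mathcomp Require Import finmap multiset.
From mathcomp Require Import zify.

Set Implicit Arguments.
Unset Strict Implicit.
Unset Printing Implicit Defensive.

Local Open Scope mset_scope.

Definition e := Meta mset0 [::].
Definition mul (m1 m2 : meta) : meta :=
  let: Meta z1 G1 := m1 in let: Meta z2 G2 := m2 in Meta (z1 `+` z2) (G1 ++ G2).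
Definition br m := Meta mset0 [:: TB m].
Definition plug X l r m := fill X (mul (mul l m) r).
Definition holds X l r C m := derivable (plug X l r m) C.
Definition cl (S : meta -> Prop) m :=
  forall X l r C, (forall s, S s -> holds X l r C s) -> holds X l r C m.

Ltac mseq := apply/msetP => ?; rewrite ?msetE2 ?mset0E; apply/eqP; lia.
Ltac lseq := rewrite ?cats0 -?catA /= ?cats0 -?catA /= //.
Ltac meq := rewrite /plug /mul /br /e /=; try congr fill; congr Meta; try mseq; try lseq.

Lemma der_conv T T' C : derivable T C -> T = T' -> derivable T' C.
Proof. by move=> H <-. Qed.

Fixpoint comp (X Y : ctx) : ctx :=
  match X with Hole => Y | CBr z L c R => CBr z L (comp c Y) R end.
Lemma fill_comp X Y T : fill (comp X Y) T = fill X (fill Y T).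
Proof. by elim: X => //= z L c -> R. Qed.

Lemma plug_comp X l r X' l' r' : exists X'' l'' r'',
  forall m, plug X l r (plug X' l' r' m) = plug X'' l'' r'' m.
Proof.
case: X' => [|z L c R].
  exists X, (mul l l'), (mul r' r) => m; rewrite /plug /=.
  by case: l l' r r' m => ? ? [? ?] [? ?] [? ?] [? ?]; meq.
case: l r => zl Gl [zr Gr].
exists (comp X (CBr (zl `+` z `+` zr) (Gl ++ L) c (R ++ Gr))), l', r' => m.
rewrite /plug fill_comp /=; congr fill; meq.
Qed.

Lemma mul_stC w m : mul (Meta w [::]) m = mul m (Meta w [::]).
Proof. by case: m => ? ?; meq. Qed.
Lemma mulA a b c : mul a (mul b c) = mul (mul a b) c.
Proof. by case: a b c => ? ? [? ?] [? ?]; meq. Qed.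
Lemma mul1m a : mul e a = a.
Proof. by case: a => ? ?; meq. Qed.
Lemma mulm1 a : mul a e = a.
Proof. by case: a => ? ?; meq. Qed.

Lemma cl_sub (S : meta -> Prop) m : S m -> cl S m.
Proof. by move=> Sm X l r C; apply. Qed.

Lemma cl_plug S p X l r C X' l' r' : cl S p ->
  (forall s, S s -> holds X l r C (plug X' l' r' s)) -> holds X l r C (plug X' l' r' p).
Proof.
move=> Hp H; have [X'' [l'' [r'' E]]] := plug_comp X l r X' l' r'.
rewrite /holds E; apply: Hp => s Ss; rewrite /holds -E; exact: H.
Qed.

Definition closed (S : meta -> Prop) := forall m, cl S m -> S m.

Lemma cl_closed S : closed (cl S).
Proof. by move=> m H X l r C HS; apply: H => s Hs; exact: Hs _ _ _ _ HS. Qed.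

Lemma cl_mono (S T : meta -> Prop) m : (forall x, S x -> T x) -> cl S m -> cl T m.
Proof. by move=> ST H X l r C HT; apply: H => s /ST; apply: HT. Qed.

Lemma plug_id m : plug Hole e e m = m.
Proof. by rewrite /plug mul1m mulm1. Qed.

Lemma closed_rule (Y : meta -> Prop) P Q : closed Y ->
  (forall X l r C, derivable (plug X l r P) C -> derivable (plug X l r Q) C) ->
  Y P -> Y Q.
Proof. by move=> cY H YP; apply: cY => X l r C HY; apply: H; apply: HY. Qed.

Lemma closed_rule_plug (Y : meta -> Prop) X' l' r' P Q : closed Y ->
  (forall X l r C, derivable (plug X l r P) C -> derivable (plug X l r Q) C) ->
  Y (plug X' l' r' P) -> Y (plug X' l' r' Q).
Proof.
move=> cY H; apply: closed_rule => // X l r C.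
have [X'' [l'' [r'' E]]] := plug_comp X l r X' l' r'.
rewrite !E; exact: H.
Qed.

Lemma closed_cl (Y S : meta -> Prop) X l r p : closed Y -> cl S p ->
  (forall s, S s -> Y (plug X l r s)) -> Y (plug X l r p).
Proof.
move=> cY Hp H; apply: cY => X0 l0 r0 C0 HY.
apply: cl_plug Hp _ => s Ss; apply: HY; exact: H.
Qed.

Lemma closed_cl0 (Y S : meta -> Prop) p : closed Y -> cl S p ->
  (forall s, S s -> Y s) -> Y p.
Proof.
move=> cY Hp H; rewrite -(plug_id p); apply: closed_cl cY Hp _ => s Ss.
rewrite plug_id; exact: H.
Qed.

Definition atom A := Meta mset0 [:: TF A].
Definition J m := exists w, w != mset0 /\ m = Meta w [::].

Fixpoint sem (A : formula) : meta -> Prop :=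
  match A with
  | Var n => fun m => derivable m (Var n)
  | One => cl (fun m => m = e)
  | Under A C => fun m => forall n, sem A n -> sem C (mul n m)
  | Over C B => fun m => forall n, sem B n -> sem C (mul m n)
  | Prod A B => cl (fun m => exists a b, sem A a /\ sem B b /\ m = mul a b)
  | And A B => fun m => sem A m /\ sem B m
  | Or A B => cl (fun m => sem A m \/ sem B m)
  | Diam A => cl (fun m => exists a, sem A a /\ m = br a)
  | BoxInv A => fun m => sem A (br m)
  | Bang A => cl (fun m => J m /\ sem A m)
  end.

Lemma br_plug m : br m = plug (CBr mset0 [::] Hole [::]) e e m.
Proof. by rewrite /plug mul1m mulm1. Qed.
Lemma mulr_plug m n : mul m n = plug Hole e n m.
Proof. by rewrite /plug mul1m. Qed.
Lemma mull_plug m n : mul n m = plug Hole n e m.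
Proof. by rewrite /plug mulm1. Qed.

Lemma sem_closed A : closed (sem A).
Proof.
elim: A => [n||A IHA C IHC|C IHC B IHB|A IHA B IHB|A IHA B IHB|A IHA B IHB|A IHA|A IHA|A IHA] /=;
  try exact: cl_closed.
- move=> m H; have := H Hole e e (Var n); rewrite /holds plug_id; apply=> s.
  by rewrite plug_id.
- move=> m H n Hn; rewrite mull_plug; apply: closed_cl IHC H _ => s Hs.
  by rewrite -mull_plug; apply: Hs.
- move=> m H n Hn; rewrite mulr_plug; apply: closed_cl IHC H _ => s Hs.
  by rewrite -mulr_plug; apply: Hs.
- move=> m H; split.
  + by apply: closed_cl0 IHA H _ => s [].
  + by apply: closed_cl0 IHB H _ => s [].
- move=> m H; rewrite br_plug; apply: closed_cl IHA H _ => s Hs.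
  by rewrite -br_plug.
Qed.

Section Rules.
Variables (X : ctx) (l r : meta) (D : formula).

Lemma R_overL n B C : derivable n B -> derivable (plug X l r (atom C)) D ->
  derivable (plug X l r (mul (atom (Over C B)) n)) D.
Proof.
case: l r n => zl Gl [zr Gr] [zn Gn] Hn H.
apply: der_conv (d_overL (X := X) (z2 := zl `+` zr) (D1 := Gl) (D2 := Gr) Hn
  (der_conv H _)) _; meq.
Qed.

Lemma R_underL n A C : derivable n A -> derivable (plug X l r (atom C)) D ->
  derivable (plug X l r (mul n (atom (Under A C)))) D.
Proof.
case: l r n => zl Gl [zr Gr] [zn Gn] Hn H.
apply: der_conv (d_underL (X := X) (z2 := zl `+` zr) (D1 := Gl) (D2 := Gr) Hn
  (der_conv H _)) _; meq.
Qed.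

Lemma R_prodL A B : derivable (plug X l r (mul (atom A) (atom B))) D ->
  derivable (plug X l r (atom (Prod A B))) D.
Proof.
case: l r => zl Gl [zr Gr] H.
apply: der_conv (d_prodL (X := X) (z := zl `+` zr) (D1 := Gl) (D2 := Gr)
  (der_conv H _)) _; meq.
Qed.

Lemma R_oneL : derivable (plug X l r e) D -> derivable (plug X l r (atom One)) D.
Proof.
case: l r => zl Gl [zr Gr] H.
apply: der_conv (d_oneL (X := X) (z := zl `+` zr) (D1 := Gl) (D2 := Gr)
  (der_conv H _)) _; meq.
Qed.

Lemma R_orL A1 A2 : derivable (plug X l r (atom A1)) D ->
  derivable (plug X l r (atom A2)) D -> derivable (plug X l r (atom (Or A1 A2))) D.
Proof.
case: l r => zl Gl [zr Gr] H1 H2.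
apply: der_conv (d_orL (X := X) (z := zl `+` zr) (D1 := Gl) (D2 := Gr)
  (der_conv H1 _) (der_conv H2 _)) _; meq.
Qed.

Lemma R_andL1 A1 A2 : derivable (plug X l r (atom A1)) D ->
  derivable (plug X l r (atom (And A1 A2))) D.
Proof.
case: l r => zl Gl [zr Gr] H1.
apply: der_conv (d_andL1 (X := X) (z := zl `+` zr) (D1 := Gl) (D2 := Gr) A2
  (der_conv H1 _)) _; meq.
Qed.

Lemma R_andL2 A1 A2 : derivable (plug X l r (atom A2)) D ->
  derivable (plug X l r (atom (And A1 A2))) D.
Proof.
case: l r => zl Gl [zr Gr] H1.
apply: der_conv (d_andL2 (X := X) (z := zl `+` zr) (D1 := Gl) (D2 := Gr) A1
  (der_conv H1 _)) _; meq.
Qed.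

Lemma R_boxinvL A : derivable (plug X l r (atom A)) D ->
  derivable (plug X l r (br (atom (BoxInv A)))) D.
Proof.
case: l r => zl Gl [zr Gr] H1.
apply: der_conv (d_boxinvL (X := X) (z := zl `+` zr) (D1 := Gl) (D2 := Gr)
  (der_conv H1 _)) _; meq.
Qed.

Lemma R_diamL A : derivable (plug X l r (br (atom A))) D ->
  derivable (plug X l r (atom (Diam A))) D.
Proof.
case: l r => zl Gl [zr Gr] H1.
apply: der_conv (d_diamL (X := X) (z := zl `+` zr) (D1 := Gl) (D2 := Gr)
  (der_conv H1 _)) _; meq.
Qed.

Lemma R_bangL A : derivable (plug X l r (Meta [mset A] [::])) D ->
  derivable (plug X l r (atom (Bang A))) D.
Proof.
case: l r => zl Gl [zr Gr] H1.
apply: der_conv (d_bangL (X := X) (A := A) (z := zl `+` zr) (G1 := Gl) (G2 := Gr)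
  (der_conv H1 _)) _; meq.
Qed.

Lemma R_bangP A : derivable (plug X l r (atom A)) D ->
  derivable (plug X l r (Meta [mset A] [::])) D.
Proof.
case: l r => zl Gl [zr Gr] H1.
apply: der_conv (d_bangP (X := X) (A := A) (z := zl `+` zr) (G1 := Gl) (G2 := Gr)
  (der_conv H1 _)) _; meq.
Qed.

End Rules.

Lemma cl_der (S : meta -> Prop) m C : cl S m -> (forall s, S s -> derivable s C) ->
  derivable m C.
Proof.
move=> H HS; have := H Hole e e C; rewrite /holds plug_id; apply=> s /HS.
by rewrite plug_id.
Qed.

Lemma mset1_neq0 (A : formula) : [mset A] != mset0.
Proof. by apply/eqP => /msetP/(_ A); rewrite msetnxx mset0E. Qed.

Lemma okada A : sem A (atom A) /\ forall m, sem A m -> derivable m A.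
Proof.
elim: A => [n||A [iA dA] C [iC dC]|C [iC dC] B [iB dB]|A [iA dA] B [iB dB]
  |A [iA dA] B [iB dB]|A [iA dA] B [iB dB]|A [iA dA]|A [iA dA]|A [iA dA]] /=.
- by split=> //; apply: d_ax.
- split.
    by move=> X l r D H; apply: R_oneL; apply: H.
  by move=> m H; apply: cl_der H _ => s ->; apply: d_oneR.
- split.
    move=> n Hn; apply: closed_rule (@sem_closed C) _ iC => X l r D H.
    exact: R_underL (dA _ Hn) H.
  move=> [z G] H; apply: d_underR; apply: der_conv (dC _ (H _ iA)) _; meq.
- split.
    move=> n Hn; apply: closed_rule (@sem_closed C) _ iC => X l r D H.
    exact: R_overL (dB _ Hn) H.
  move=> [z G] H; apply: d_overR; apply: der_conv (dC _ (H _ iB)) _; meq.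
- split.
    by move=> X l r D H; apply: R_prodL; apply: H; exists (atom A), (atom B).
  move=> m H; apply: cl_der H _ => s [[z1 G1] [[z2 G2] [Ha [Hb ->]]]].
  exact: d_prodR (dA _ Ha) (dB _ Hb).
- split.
    split.
      by apply: closed_rule (@sem_closed A) _ iA => X l r D H; apply: R_andL1.
    by apply: closed_rule (@sem_closed B) _ iB => X l r D H; apply: R_andL2.
  by move=> m [Ha Hb]; apply: d_andR; [apply: dA | apply: dB].
- split.
    by move=> X l r D H; apply: R_orL; apply: H; [left|right].
  move=> m H; apply: cl_der H _ => s [Ha|Hb].
    by apply: d_orR1; apply: dA.
  by apply: d_orR2; apply: dB.
- split.
    by move=> X l r D H; apply: R_diamL; apply: H; exists (atom A).
  move=> m H; apply: cl_der H _ => s [a [Ha ->]].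
  exact: d_diamR (dA _ Ha).
- split.
    by apply: closed_rule (@sem_closed A) _ iA => X l r D H; apply: R_boxinvL.
  by move=> m H; apply: d_boxinvR; apply: dA.
- split.
    move=> X l r D H; apply: R_bangL; apply: H; split.
      by exists [mset A]; split=> //; apply: mset1_neq0.
    by apply: closed_rule (@sem_closed A) _ iA => X' l' r' D' H'; apply: R_bangP.
  move=> m H; apply: cl_der H _ => s [[w [Hw ->]] Hs].
  exact: d_bangR' Hw (dA _ Hs).
Qed.

Lemma sem_st A : sem A (Meta [mset A] [::]).
Proof.
have [iA _] := okada A.
by apply: closed_rule (@sem_closed A) _ iA => X l r D H; apply: R_bangP.
Qed.

Inductive inst_stoup : stoup -> meta -> Prop :=
 | ist0 : inst_stoup mset0 e
 | istA z A w s : w != mset0 -> sem A (Meta w [::]) -> inst_stoup z s ->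
     inst_stoup (z `+` [mset A]) (mul (Meta w [::]) s).

Inductive inst : meta -> meta -> Prop :=
 | inst_m z G s g : inst_stoup z s -> inst_seq G g -> inst (Meta z G) (mul s g)
with inst_seq : seq tterm -> meta -> Prop :=
 | is_nil : inst_seq [::] e
 | is_F A G a g : sem A a -> inst_seq G g -> inst_seq (TF A :: G) (mul a g)
 | is_B T G t g : inst T t -> inst_seq G g -> inst_seq (TB T :: G) (mul (br t) g).

Lemma msetD_eq0 (a b : stoup) : a `+` b = mset0 -> a = mset0 /\ b = mset0.
Proof.
move=> E; split; apply/msetP => x; move/msetP: E => /(_ x);
  rewrite !msetE2 !mset0E => /eqP; rewrite addn_eq0 => /andP[/eqP ha /eqP hb];
  first [exact: ha | exact: hb].
Qed.

Lemma ist_shape z s : inst_stoup z s ->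
  exists w, s = Meta w [::] /\ (z != mset0 -> w != mset0).
Proof.
elim=> [|z' A w s' Hw _ _ [w' [-> _]]]; first by exists mset0.
exists (w `+` w'); split; first by meq.
by move=> _; apply/eqP => /msetD_eq0 [E _]; move/eqP: Hw.
Qed.

Lemma st_comm z s m : inst_stoup z s -> mul s m = mul m s.
Proof. by move=> /ist_shape [w [-> _]]; rewrite mul_stC. Qed.

Lemma istD z1 s1 z2 s2 : inst_stoup z1 s1 -> inst_stoup z2 s2 ->
  inst_stoup (z1 `+` z2) (mul s1 s2).
Proof.
move=> H1; elim=> [|z A w s Hw HA Hs IH]; first by rewrite msetD0 mulm1.
rewrite msetDA.
have -> : mul s1 (mul (Meta w [::]) s) = mul (Meta w [::]) (mul s1 s).
  by rewrite mulA (st_comm _ H1) mulA.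
exact: istA.
Qed.

Lemma ist0_inv s : inst_stoup mset0 s -> s = e.
Proof.
move E : mset0 => z H; elim: H E => // z' A w s' _ _ _ _ /msetP /(_ A).
by rewrite !msetE2 msetnxx mset0E addn1.
Qed.

Lemma mset1_inv (z : stoup) A B : z `+` [mset B] = [mset A] -> z = mset0 /\ B = A.
Proof.
move=> E; have EB := E; move/msetP: EB => /(_ B); rewrite !msetE2 msetnxx msetnE.
case: eqP => [EBA _|]; last by rewrite addn1.
subst B.
split=> //; apply/msetP => x; move/msetP: E => /(_ x); rewrite !msetE2 mset0E.
by move=> Ex; apply/eqP; rewrite -(eqn_add2r ([mset A] x)) Ex add0n.
Qed.

Lemma ist1_inv A s : inst_stoup [mset A] s ->
  exists w, w != mset0 /\ sem A (Meta w [::]) /\ s = Meta w [::].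
Proof.
move E : [mset A] => z H; case: H E => [|z' B w s' Hw HB Hs E].
  by move/msetP => /(_ A); rewrite mset0E msetnxx.
have [E1 E2] := mset1_inv (esym E); subst.
by exists w; rewrite (ist0_inv Hs) mulm1.
Qed.

Lemma istD_inv z s : inst_stoup z s -> forall z1 z2, z = z1 `+` z2 ->
  exists s1 s2, [/\ inst_stoup z1 s1, inst_stoup z2 s2 & s = mul s1 s2].
Proof.
elim=> [|z0 A w s0 Hw HA Hs IH] z1 z2.
  move=> /esym /msetD_eq0 [-> ->]; exists e, e; split=> //; [exact: ist0 | exact: ist0 | by rewrite mul1m].
move=> E.
have : A \in z1 `+` z2 by rewrite -E in_msetD in_mset1 eqxx orbT.
rewrite in_msetD => /orP [inA|inA].
- have Ez1 : z1 = (z1 `\ A) `+` [mset A] by rewrite msetDC msetB1K.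
  have Ez : z0 = (z1 `\ A) `+` z2.
    have := congr1 (fun t => t `\` [mset A]) E; rewrite /= msetDKBC => ->.
    by rewrite {1}Ez1 msetDAC msetDKBC.
  have [s1 [s2 [H1 H2 ->]]] := IH _ _ Ez.
  exists (mul (Meta w [::]) s1), s2; split => //; last by rewrite mulA.
  by rewrite Ez1; apply: istA.
- have Ez2 : z2 = (z2 `\ A) `+` [mset A] by rewrite msetDC msetB1K.
  have Ez : z0 = z1 `+` (z2 `\ A).
    have := congr1 (fun t => t `\` [mset A]) E; rewrite /= msetDKBC => ->.
    by rewrite {1}Ez2 msetDA msetDKBC.
  have [s1 [s2 [H1 H2 ->]]] := IH _ _ Ez.
  exists s1, (mul (Meta w [::]) s2); split => //; last first.
    by rewrite mulA -(st_comm _ H1) -mulA.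
  by rewrite Ez2; apply: istA.
Qed.



Lemma inst_node z G m : inst (Meta z G) m ->
  exists s g, [/\ inst_stoup z s, inst_seq G g & m = mul s g].
Proof. by move=> H; inversion H; exists s, g. Qed.

Lemma is_consF A G m : inst_seq (TF A :: G) m ->
  exists a g, [/\ sem A a, inst_seq G g & m = mul a g].
Proof. by move=> H; inversion H; exists a, g. Qed.

Lemma is_consB T G m : inst_seq (TB T :: G) m ->
  exists t g, [/\ inst T t, inst_seq G g & m = mul (br t) g].
Proof. by move=> H; inversion H; exists t, g. Qed.

Lemma is_nil_inv m : inst_seq [::] m -> m = e.
Proof. by move=> H; inversion H. Qed.

Lemma inst_seq_cat G1 G2 m : inst_seq (G1 ++ G2) m <->
  exists m1 m2, [/\ inst_seq G1 m1, inst_seq G2 m2 & m = mul m1 m2].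
Proof.
split.
  elim: G1 m => [|t G1 IH] m /=.
    by move=> H; exists e, m; split => //; [exact: is_nil | rewrite mul1m].
  case: t => [A|T].
    move=> /is_consF [a [g [Ha Hg ->]]].
    have [m1 [m2 [H1 H2 ->]]] := IH _ Hg.
    by exists (mul a m1), m2; split => //; [exact: is_F | rewrite mulA].
  move=> /is_consB [a [g [Ha Hg ->]]].
  have [m1 [m2 [H1 H2 ->]]] := IH _ Hg.
  by exists (mul (br a) m1), m2; split => //; [exact: is_B | rewrite mulA].
elim: G1 m => [|t G1 IH] m [m1 [m2 [H1 H2 ->]]] /=.
  by rewrite (is_nil_inv H1) mul1m.
case: t H1 => [A|T].
  move=> /is_consF [a [g [Ha Hg ->]]].
  by rewrite -mulA; apply: is_F => //; apply: IH; exists g, m2.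
move=> /is_consB [a [g [Ha Hg ->]]].
by rewrite -mulA; apply: is_B => //; apply: IH; exists g, m2.
Qed.

Lemma inst_atom A a : sem A a -> inst (atom A) a.
Proof.
move=> Ha; have := inst_m ist0 (is_F Ha is_nil).
by rewrite mulm1 mul1m.
Qed.

Lemma inst_atom_inv A a : inst (atom A) a -> sem A a.
Proof.
move=> /inst_node [s [g [/ist0_inv -> /is_consF [a' [g' [Ha /is_nil_inv -> ->]]] ->]]].
by rewrite mul1m mulm1.
Qed.

Lemma inst_conv T m m' : inst T m -> m = m' -> inst T m'.
Proof. by move=> H <-. Qed.

Definition mget (m : meta) := let: Meta z _ := m in z.
Definition gseq (m : meta) := let: Meta _ G := m in G.

Lemma plug_shift X l r a p b : plug X l r (mul a (mul p b)) = plug X (mul l a) (mul b r) p.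
Proof. by rewrite /plug !mulA. Qed.

Lemma inst_focus X z S m : inst (fill X (Meta z S)) m ->
  exists X' l r s sm, [/\ inst_stoup z s, inst_seq S sm,
    m = plug X' l r (mul s sm) &
    forall z' S' s' sm', inst_stoup z' s' -> inst_seq S' sm' ->
      inst (fill X (Meta z' S')) (plug X' l r (mul s' sm'))].
Proof.
elim: X m => [|z0 L c IH R] m /=.
  move=> /inst_node [s [g [Hs Hg ->]]].
  exists Hole, e, e, s, g; split => //; first by rewrite plug_id.
  by move=> z' S' s' sm' H1 H2; rewrite plug_id; apply: inst_m.
move=> /inst_node [s0 [g [Hs0 /inst_seq_cat [gL [g' [HL /is_consB [t [gR [Ht HR ->]]] ->]]] ->]]].
have [X' [l [r [s [sm [Hs Hsm Et Hrev]]]]]] := IH _ Ht.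
have [w0 [Ew0 _]] := ist_shape Hs0.
move: Et HL HR Hrev => -> HL HR Hrev.

exists (CBr (w0 `+` mget gL `+` mget gR) (gseq gL) X' (gseq gR)), l, r, s, sm; split => //.
  by rewrite Ew0; case: gL gR {HL HR} => [wL GL] [wR GR]; meq.
move=> z' S' s' sm' H1 H2.
have Hseq : inst_seq (L ++ TB (fill c (Meta z' S')) :: R)
   (mul gL (mul (br (plug X' l r (mul s' sm'))) gR)).
  by apply/inst_seq_cat; do 2 eexists; split; [exact: HL | exact: is_B (Hrev _ _ _ _ H1 H2) HR | done].
apply: inst_conv (inst_m Hs0 Hseq) _.
by rewrite Ew0; case: gL gR {HL HR Hseq} => [wL GL] [wR GR]; meq.
Qed.

Lemma ist_id z : inst_stoup z (Meta z [::]).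
Proof.
rewrite -(seq_mset_id z); elim: (enum_mset z) => [|a s IH].
  have -> : seq_mset [::] = mset0 :> stoup by apply/msetP => x; rewrite mset_seqE mset0E.
  exact: ist0.
have -> : seq_mset (a :: s) = seq_mset s `+` [mset a] :> stoup.
  apply/msetP => x; rewrite !msetE2 !mset_seqE msetnE /= addnC.
  by rewrite eq_sym; case: eqP.
have := istA (mset1_neq0 a) (sem_st a) IH.
by congr inst_stoup; meq.
Qed.

Lemma inst_id : forall T, inst T T.
Proof.
fix IH 1 => -[z G].
have {2}-> : Meta z G = mul (Meta z [::]) (Meta mset0 G) by meq.
apply: inst_m; first exact: ist_id.
move: G; fix IHs 1 => -[|[A|T] G].
- exact: is_nil.
- have -> : Meta mset0 (TF A :: G) = mul (atom A) (Meta mset0 G) by meq.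
  apply: is_F; [exact: (proj1 (okada A)) | exact: IHs].
- have -> : Meta mset0 (TB T :: G) = mul (br T) (Meta mset0 G) by meq.
  apply: is_B; [exact: IH | exact: IHs].
Qed.

Lemma inst_seq_id G : inst_seq G (Meta mset0 G).
Proof.
have := inst_id (Meta mset0 G) => /inst_node [s [g [/ist0_inv -> Hg]]].
by rewrite mul1m => ->.
Qed.

Lemma inst_fill X T t : inst T t -> inst (fill X T) (fill X t).
Proof.
elim: X => [|z L c IH R] //= Ht.
have := inst_m (ist_id z) (proj2 (inst_seq_cat _ _ _) (ex_intro _ _ (ex_intro _ _
   (And3 (inst_seq_id L) (is_B (IH Ht) (inst_seq_id R)) erefl)))).
by congr inst; meq.
Qed.

Lemma is_cat G1 G2 m1 m2 : inst_seq G1 m1 -> inst_seq G2 m2 ->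
  inst_seq (G1 ++ G2) (mul m1 m2).
Proof. by move=> H1 H2; apply/inst_seq_cat; exists m1, m2. Qed.

Lemma sem_conv C m m' : sem C m -> m = m' -> sem C m'.
Proof. by move=> H <-. Qed.

Ltac dmeq := repeat match goal with m : meta |- _ => destruct m end; meq.

Ltac shape H := let w := fresh "w" in let E := fresh "E" in let N := fresh "N" in
  have [w [E N]] := ist_shape H; subst.

Lemma sound T C : derivable T C -> forall m, inst T m -> sem C m.
Proof.
elim=> {T C}.
- by move=> A m /inst_atom_inv.
- move=> m /inst_node [s [g [/ist0_inv -> /is_nil_inv -> ->]]].
  by rewrite mul1m; apply: cl_sub.
- move=> X z1 z2 G D1 D2 B C D _ IH1 _ IH2 m
    /inst_focus [X' [l [r [s [sm [Hs Hsm -> Hrev]]]]]].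
  have [s1 [s2 [Hs1 Hs2 Es]]] := istD_inv Hs (erefl _).
  move: Hsm => /inst_seq_cat [d1 [g' [Hd1
    /is_consF [p [g'' [Hp /inst_seq_cat [g [d2 [Hg Hd2 ->]]] ->]]] ->]]].
  have Hc : sem C (mul p (mul s1 g)) := Hp _ (IH1 _ (inst_m Hs1 Hg)).
  apply: sem_conv (IH2 _ (Hrev _ _ _ _ Hs2 (is_cat Hd1 (is_F Hc Hd2)))) _.
  subst; shape Hs1; shape Hs2; dmeq.
- move=> z G B C _ IH m /inst_node [s [g [Hs Hg ->]]] n Hn.
  apply: sem_conv (IH _ (inst_m Hs (is_cat Hg (is_F Hn is_nil)))) _; dmeq.
- move=> X z1 z2 G D1 D2 A C D _ IH1 _ IH2 m
    /inst_focus [X' [l [r [s [sm [Hs Hsm -> Hrev]]]]]].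
  have [s1 [s2 [Hs1 Hs2 Es]]] := istD_inv Hs (erefl _).
  move: Hsm => /inst_seq_cat [d1 [g' [Hd1
    /inst_seq_cat [g [g'' [Hg /is_consF [p [d2 [Hp Hd2 ->]]] ->]]] ->]]].
  have Hc : sem C (mul (mul s1 g) p) := Hp _ (IH1 _ (inst_m Hs1 Hg)).
  apply: sem_conv (IH2 _ (Hrev _ _ _ _ Hs2 (is_cat Hd1 (is_F Hc Hd2)))) _.
  subst; shape Hs1; shape Hs2; dmeq.
- move=> z G A C _ IH m /inst_node [s [g [Hs Hg ->]]] n Hn.
  apply: sem_conv (IH _ (inst_m Hs (is_F Hn Hg))) _; shape Hs; dmeq.
- move=> X z D1 D2 A B D _ IH m
    /inst_focus [X' [l [r [s [sm [Hs Hsm -> Hrev]]]]]].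
  move: Hsm => /inst_seq_cat [d1 [g' [Hd1 /is_consF [p [d2 [Hp Hd2 ->]]] ->]]].
  rewrite mulA plug_shift; apply: closed_cl (@sem_closed D) Hp _ => q [a [b [Ha [Hb ->]]]].
  apply: sem_conv (IH _ (Hrev _ _ _ _ Hs (is_cat Hd1 (is_F Ha (is_F Hb Hd2))))) _.
  shape Hs; dmeq.
- move=> z1 z2 D G A B _ IH1 _ IH2 m /inst_node [s [g [Hs Hg ->]]].
  have [s1 [s2 [Hs1 Hs2 ->]]] := istD_inv Hs (erefl _).
  move: Hg => /inst_seq_cat [d [gg [Hd Hgg ->]]].
  apply: cl_sub; exists (mul s1 d), (mul s2 gg); split; [|split].
  + exact (IH1 _ (inst_m Hs1 Hd)).
  + exact (IH2 _ (inst_m Hs2 Hgg)).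
  + shape Hs1; shape Hs2; dmeq.
- move=> X z D1 D2 A _ IH m
    /inst_focus [X' [l [r [s [sm [Hs Hsm -> Hrev]]]]]].
  move: Hsm => /inst_seq_cat [d1 [g' [Hd1 /is_consF [p [d2 [Hp Hd2 ->]]] ->]]].
  rewrite mulA plug_shift; apply: closed_cl (@sem_closed A) Hp _ => q ->.
  apply: sem_conv (IH _ (Hrev _ _ _ _ Hs (is_cat Hd1 Hd2))) _.
  shape Hs; dmeq.
- move=> X z D1 D2 A1 A2 C _ IH1 _ IH2 m
    /inst_focus [X' [l [r [s [sm [Hs Hsm -> Hrev]]]]]].
  move: Hsm => /inst_seq_cat [d1 [g' [Hd1 /is_consF [p [d2 [Hp Hd2 ->]]] ->]]].
  rewrite mulA plug_shift; apply: closed_cl (@sem_closed C) Hp _ => q [Hq|Hq].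
    apply: sem_conv (IH1 _ (Hrev _ _ _ _ Hs (is_cat Hd1 (is_F Hq Hd2)))) _.
    shape Hs; dmeq.
  apply: sem_conv (IH2 _ (Hrev _ _ _ _ Hs (is_cat Hd1 (is_F Hq Hd2)))) _.
  shape Hs; dmeq.
- by move=> Xi A1 A2 _ IH m Hm; apply: cl_sub; left; apply: IH.
- by move=> Xi A1 A2 _ IH m Hm; apply: cl_sub; right; apply: IH.
- move=> X z D1 D2 A1 A2 C _ IH m
    /inst_focus [X' [l [r [s [sm [Hs Hsm -> Hrev]]]]]].
  move: Hsm => /inst_seq_cat [d1 [g' [Hd1 /is_consF [p [d2 [[Hp _] Hd2 ->]]] ->]]].
  exact: IH _ (Hrev _ _ _ _ Hs (is_cat Hd1 (is_F Hp Hd2))).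
- move=> X z D1 D2 A1 A2 C _ IH m
    /inst_focus [X' [l [r [s [sm [Hs Hsm -> Hrev]]]]]].
  move: Hsm => /inst_seq_cat [d1 [g' [Hd1 /is_consF [p [d2 [[_ Hp] Hd2 ->]]] ->]]].
  exact: IH _ (Hrev _ _ _ _ Hs (is_cat Hd1 (is_F Hp Hd2))).
- by move=> Xi A1 A2 _ IH1 _ IH2 m Hm; split; [apply: IH1 | apply: IH2].
- move=> X z D1 D2 A B _ IH m
    /inst_focus [X' [l [r [s [sm [Hs Hsm -> Hrev]]]]]].
  move: Hsm => /inst_seq_cat [d1 [g' [Hd1 /is_consB [t [d2 [/inst_atom_inv Ht Hd2 ->]]] ->]]].
  exact: IH _ (Hrev _ _ _ _ Hs (is_cat Hd1 (is_F (A := A) (a := br t) Ht Hd2))).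
- move=> Xi A _ IH m Hm /=.
  apply: sem_conv (IH _ (inst_m ist0 (is_B Hm is_nil))) _; dmeq.
- move=> X z D1 D2 A B _ IH m
    /inst_focus [X' [l [r [s [sm [Hs Hsm -> Hrev]]]]]].
  move: Hsm => /inst_seq_cat [d1 [g' [Hd1 /is_consF [p [d2 [Hp Hd2 ->]]] ->]]].
  rewrite mulA plug_shift; apply: closed_cl (@sem_closed B) Hp _ => q [a [Ha ->]].
  apply: sem_conv (IH _ (Hrev _ _ _ _ Hs (is_cat Hd1 (is_B (inst_atom Ha) Hd2)))) _.
  shape Hs; dmeq.
- move=> Xi A _ IH m
    /inst_node [s [g [/ist0_inv -> /is_consB [t [g' [Ht /is_nil_inv -> ->]]] ->]]].
  apply: cl_sub; exists t; split; [exact: IH | dmeq].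
- move=> X z G1 G2 A B _ IH m
    /inst_focus [X' [l [r [s [sm [Hs Hsm -> Hrev]]]]]].
  move: Hsm => /inst_seq_cat [g1 [g' [Hg1 /is_consF [p [g2 [Hp Hg2 ->]]] ->]]].
  rewrite mulA plug_shift; apply: closed_cl (@sem_closed B) Hp _ => q [[w [Hw ->]] Hq].
  apply: sem_conv (IH _ (Hrev _ _ _ _ (istA Hw Hq Hs) (is_cat Hg1 Hg2))) _.
  shape Hs; dmeq.
- move=> X z G1 G2 A B _ IH m
    /inst_focus [X' [l [r [s [sm [Hs Hsm -> Hrev]]]]]].
  have [s0 [sA [Hs0 /ist1_inv [w [Hw [HA ->]]] ->]]] := istD_inv Hs (erefl _).
  move: Hsm => /inst_seq_cat [g1 [g2 [Hg1 Hg2 ->]]].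
  apply: sem_conv (IH _ (Hrev _ _ _ _ Hs0 (is_cat Hg1 (is_F HA Hg2)))) _.
  shape Hs0; dmeq.
- move=> z B Hz _ IH m Hm.
  have := Hm => /inst_node [s [g [Hs /is_nil_inv -> Em]]].
  have [w [Ew Nw]] := ist_shape Hs.
  apply: cl_sub; split; last exact: IH.
  by exists w; split; [exact: Nw | rewrite Em Ew mulm1].
- move=> X z1 z2 z' G1 G2 G3 C Hz2 _ IH m
    /inst_focus [X' [l [r [s [sm [Hs Hsm -> Hrev]]]]]].
  have [s12 [s' [Hs12 Hs' ->]]] := istD_inv Hs (erefl _).
  have [s1 [s2 [Hs1 Hs2 ->]]] := istD_inv Hs12 (erefl _).
  move: Hsm => /inst_seq_cat [g1 [g' [Hg1 /inst_seq_cat [g2 [g3 [Hg2 Hg3 ->]]] ->]]].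
  have HP := IH _ (Hrev _ _ _ _ (istD Hs1 Hs2)
     (is_cat Hg1 (is_B (inst_m (istD Hs' Hs2) Hg2) Hg3))).
  apply: closed_rule_plug (@sem_closed C) _ HP => X0 l0 r0 C0 H.
  have [w1 [E1 _]] := ist_shape Hs1; subst s1.
  have [w' [E' _]] := ist_shape Hs'; subst s'.
  have [w2 [E2 N2]] := ist_shape Hs2; subst s2.
  have Hw2 := N2 Hz2.
  destruct l0 as [zl Gl], r0 as [zr Gr], g1 as [wg1 Gg1], g2 as [wg2 Gg2], g3 as [wg3 Gg3].
  move: H; rewrite /plug /mul /= => H.
  apply: der_conv (d_bangC' (X := X0) (z1 := zl `+` w1 `+` wg1 `+` wg3 `+` zr)
     (z' := w' `+` wg2) (G1 := Gl ++ Gg1) (G2 := Gg2) (G3 := Gg3 ++ Gr) Hw2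
     (der_conv H _)) _.
  + congr fill; congr Meta; first mseq. by rewrite msetDAC; lseq.
  + congr fill; congr Meta; [mseq | lseq].
Qed.

Unset Implicit Arguments.

Theorem theorem2 (xi zeta : stoup) (Pi G1 G2 : seq tterm) (A C : formula) (X : ctx) :
  derivable (Meta xi Pi) A ->
  derivable (fill X (Meta zeta (G1 ++ TF A :: G2))) C ->
  derivable (fill X (Meta (msetD xi zeta) (G1 ++ Pi ++ G2))) C.
Proof.
move=> H1 H2.
have HA : sem A (Meta xi Pi) := sound H1 (inst_id _).
have Hn : inst (Meta zeta (G1 ++ TF A :: G2)) (Meta (xi `+` zeta) (G1 ++ Pi ++ G2)).
  apply: inst_conv (inst_m (ist_id zeta)
    (is_cat (inst_seq_id G1) (is_F HA (inst_seq_id G2)))) _; meq.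
exact: (proj2 (okada C)) _ (sound H2 (inst_fill X Hn)).
Qed.
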